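(* Let $(X,d_X,\mu,T)$ and $(Y,d_Y,\nu,S)$ be compact metric measure-preserving systems, let $(a_r)_{r\ge1}$ be dense in $\operatorname{supp}\mu$ and $(b_r)_{r\ge1}$ dense in $\operatorname{supp}\nu$, and let $\lambda,\lambda'\in\mathcal J(T,S)$. If $\widetilde\Phi_{n,m,R}(\lambda)=\widetilde\Phi_{n,m,R}(\lambda')$ for all $n,m,R\ge1$, then $\lambda=\lambda'$.
   Context: A compact metric measure-preserving system $(X,d_X,\mu,T)$: $(X,d_X)$ compact metric, $\mu$ Borel probability, $T$ Borel with $T_\#\mu=\mu$. $\mathcal J(T,S)$: Borel probability measures on $X\times Y$ with marginals $\mu,\nu$ invariant under $T\times S$. For $z_i=(x_i,y_i)$, $\mathcal D^X_{n,m}=(d_X(T^ax_i,T^bx_j))_{1\le i,j\le n,0\le a,b<m}$. The anchored array is $\widetilde{\mathcal D}^X_{n,m,R}(z_1,\dots,z_n)=\bigl(\mathcal D^X_{n,m},(d_X(T^ax_i,a_r))_{1\le i\le n,0\le a<m,1\le r\le R}\bigr)$, and $\widetilde{\mathcal D}^Y_{n,m,R}$ is defined analogously using $d_Y$, $S$, and the anchors $b_r$. The anchored projection is $\widetilde\Phi_{n,m,R}(\lambda)=\mathrm{Law}_{\lambda^{\otimes n}}(\widetilde{\mathcal D}^X_{n,m,R},\widetilde{\mathcal D}^Y_{n,m,R})$. *)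

(* Defs.v *)
From HB Require Import structures.
From mathcomp Require Import all_boot all_order all_algebra.
From mathcomp Require Import all_classical all_reals all_analysis.
Unset Printing Implicit Defensive.
Import Order.TTheory GRing.Theory Num.Theory.
Import numFieldNormedType.Exports.
Local Open Scope classical_set_scope.
Local Open Scope ring_scope.

Section defs.
Context {R : realType}.

Definition is_metric {X : Type} (d : X -> X -> R) : Prop :=
  [/\ (forall x y, 0 <= d x y),
      (forall x y, d x y = 0 <-> x = y),
      (forall x y, d x y = d y x) &
      (forall x y z, d x z <= d x y + d y z)].

Definition mball {X : Type} (d : X -> X -> R) (x : X) (e : R) : set X :=
  [set y | d x y < e].

Definition mopen {X : Type} (d : X -> X -> R) (A : set X) : Prop :=
  forall x, A x -> exists2 e : R, 0 < e & mball d x e `<=` A.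

Definition mcompact_space {X : Type} (d : X -> X -> R) : Prop :=
  forall (I : Type) (U : I -> set X), (forall i, mopen d (U i)) ->
    [set: X] `<=` \bigcup_i U i ->
    exists2 F : set I, finite_set F & [set: X] `<=` \bigcup_(i in F) U i.

Definition borel_of {dis} {X : measurableType dis} (d : X -> X -> R) : Prop :=
  @measurable _ X = <<s [set A | mopen d A] >>.

Definition cmmps {dis} {X : measurableType dis} (d : X -> X -> R)
    (mu : probability X R) (T : X -> X) : Prop :=
  [/\ is_metric d, mcompact_space d, borel_of d,
      measurable_fun [set: X] T &
      (forall A, measurable A -> mu (T @^-1` A) = mu A)].

Definition msupp {dis} {X : measurableType dis} (d : X -> X -> R)
    (mu : probability X R) : set X :=
  [set x | forall e : R, 0 < e -> (0 < mu (mball d x e))%E].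

Definition dense_seq1 {X : Type} (d : X -> X -> R) (a : nat -> X) (A : set X)
  : Prop :=
  (forall r, (1 <= r)%N -> A (a r)) /\
  (forall x, A x -> forall e : R, 0 < e -> exists2 r, (1 <= r)%N & d x (a r) < e).

Definition joining {dX dY} {X : measurableType dX} {Y : measurableType dY}
    (mu : probability X R) (T : X -> X) (nu : probability Y R) (S : Y -> Y)
    (lam : probability (X * Y)%type R) : Prop :=
  [/\ (forall A, measurable A -> lam (A `*` [set: Y]) = mu A),
      (forall B, measurable B -> lam ([set: X] `*` B) = nu B) &
      (forall C, measurable C ->
         lam ((fun z : X * Y => (T z.1, S z.2)) @^-1` C) = lam C)].

Definition is_nfold_product {dZ} {Z : measurableType dZ} (n : nat)
    (lam : probability Z R) (P : probability (n.-tuple Z) R) : Prop :=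
  forall A : 'I_n -> set Z, (forall i, measurable (A i)) ->
    P [set t | forall i, A i (tnth t i)] = (\prod_(i < n) lam (A i))%E.

(** a real array indexed by a finite type, as a tuple (product Borel space) *)
Definition arr {I : finType} (f : I -> R) : #|I|.-tuple R :=
  [tuple f (enum_val i) | i < #|I|].

Definition Darr {X : Type} (d : X -> X -> R) (T : X -> X) (n m : nat)
    (x : 'I_n -> X) :=
  arr (fun p : 'I_n * 'I_n * 'I_m * 'I_m =>
         d (iter p.1.2 T (x p.1.1.1)) (iter p.2 T (x p.1.1.2))).

Definition Aarr {X : Type} (d : X -> X -> R) (T : X -> X) (anc : nat -> X)
    (n m k : nat) (x : 'I_n -> X) :=
  arr (fun p : 'I_n * 'I_m * 'I_k =>
         d (iter p.1.2 T (x p.1.1)) (anc (p.2 : nat).+1)).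

Definition anchored_array {X : Type} (d : X -> X -> R) (T : X -> X)
    (anc : nat -> X) (n m k : nat) (x : 'I_n -> X) :=
  (Darr d T n m x, Aarr d T anc n m k x).

Definition anchored_pair {X Y : Type} (dX : X -> X -> R) (T : X -> X)
    (a : nat -> X) (dY : Y -> Y -> R) (S : Y -> Y) (b : nat -> Y)
    (n m k : nat) (z : n.-tuple (X * Y)) :=
  (anchored_array dX T a n m k (fun i => (tnth z i).1),
   anchored_array dY S b n m k (fun i => (tnth z i).2)).

End defs.

(* Main.v *)
Require Import Defs.
From HB Require Import structures.
From mathcomp Require Import all_boot all_order all_algebra.
From mathcomp Require Import all_classical all_reals all_analysis.
From mathcomp Require Import lra.
Import Order.TTheory GRing.Theory Num.Theory.
Local Open Scope classical_set_scope.
Local Open Scope ring_scope.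



Lemma mball_open {R : realType} {X : Type} {d : X -> X -> R} x e :
  is_metric d -> mopen d (mball d x e).
Proof.
move=> [d0 _ _ dtr] y; rewrite /mball /= => dy; exists (e - d x y); first by rewrite subr_gt0.
move=> z; rewrite /mball /= => dz; have := dtr x y z; lra.
Qed.

Lemma mopen_meas {R : realType} {dis} {X : measurableType dis} {d : X -> X -> R} {A} :
  borel_of d -> mopen d A -> measurable A.
Proof. by move=> bd oA; rewrite bd; apply: sub_sigma_algebra. Qed.

Lemma negl_bigU (R : realType) dis (X : measurableType dis) (mu : probability X R)
  (s : seq X) (G : X -> set X) :
  (forall q, mu.-negligible (G q)) -> mu.-negligible (\big[setU/set0]_(q <- s) G q).
Proof.
move=> H; elim: s => [|q s IH]; first by rewrite big_nil; exact: negligible_set0.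
by rewrite big_cons; apply: negligibleU.
Qed.



Lemma bigU_in {T U : eqType} (s : seq T) (G : T -> set U) q x :
  q \in s -> G q x -> (\big[setU/set0]_(q <- s) G q) x.
Proof.
elim: s => [//|r s IH]; rewrite in_cons big_cons => /orP[/eqP <- Gx|qs Gx].
  by left.
by right; apply: IH.
Qed.

Lemma supp_full (R : realType) dis (X : measurableType dis) (d : X -> X -> R)
  (mu : probability X R) :
  is_metric d -> mcompact_space d -> borel_of d ->
  mu.-negligible (~` msupp d mu).
Proof.
move=> md cd bd.
have [d0 d00 dsym dtr] := md.
have cov j : exists s : seq X, [set: X] `<=` \bigcup_(q in [set` s]) mball d q (j.+1%:R^-1).
  case: (cd X (fun q => mball d q (j.+1%:R^-1)) (fun q => mball_open q _ md)) => [x _|F fF FF].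
    by exists x => //; rewrite /mball /= (proj2 (d00 x x) erefl) invr_gt0.
  by have [s Fs] := (proj1 (finite_seqP F)) fF; exists s; rewrite -Fs.
pose s j := projT1 (cid (cov j)).
have sP j : [set: X] `<=` \bigcup_(q in [set` s j]) mball d q (j.+1%:R^-1).
  exact: (projT2 (cid (cov j))).
pose G j q := mball d q (j.+1%:R^-1) `&` [set _ | mu (mball d q (j.+1%:R^-1)) = 0%E].
apply: (@negligibleS _ _ _ _ (\bigcup_j \big[setU/set0]_(q <- s j) G j q)).
  move=> x /= xs.
  have [e e0 mue] : exists2 e, 0 < e & mu (mball d x e) = 0%E.
    apply: contra_notP xs => H e e0; rewrite lt0e measure_ge0 andbT.
    by apply/negP => /eqP me; apply: H; exists e.
  have [j ej] : exists j, 0 + j.+1%:R^-1 < e / 2 by apply: ltr_add_invr; lra.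
  rewrite add0r in ej.
  exists j => //.
  have [q qs qx] := sP j x I.
  have qin : q \in s j by [].
  apply: (@bigU_in _ _ (s j) (G j) q x qin); split => //.
  rewrite /mball /= in qx.
  apply/eqP; rewrite -measure_le0 -mue; apply: le_measure; rewrite ?inE.
  - exact: (mopen_meas bd (mball_open _ _ md)).
  - exact: (mopen_meas bd (mball_open _ _ md)).
  move=> y; rewrite /mball /= => qy.
  have := dtr x q y; rewrite (dsym x q).
  have : j.+1%:R^-1 < e / 2 :> R by [].
  move=> H1 H2; apply: (le_lt_trans H2); rewrite [e]splitr.
  by apply: ltrD; apply: lt_trans H1.
apply: negligible_bigcup => j; apply: negl_bigU => q.
case: (pselect (mu (mball d q (j.+1%:R^-1)) = 0%E)) => h.
  apply: (negligibleS (@subIsetl _ _ _)); apply/negligibleP => //.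
  exact: (mopen_meas bd (mball_open _ _ md)).
by apply: (negligibleS _ (negligible_set0 mu)) => y [_ /= ?].
Qed.



Definition EX {R : realType} {X : Type} (d : X -> X -> R) (a : nat -> X) r (e : \bar R)
  : set X := [set x | ((d x (a r.+1))%:E < e)%E].

Definition Gset {R : realType} {X Y : Type} (dX : X -> X -> R) (dY : Y -> Y -> R)
  (a : nat -> X) (b : nat -> Y) (s t : nat -> \bar R) : set (X * Y) :=
  \bigcap_r (EX dX a r (s r) `*` EX dY b r (t r)).

Definition Bset {R : realType} {n1 n3 : nat} (k : nat) (s t : nat -> \bar R) :
  set ((n1.-tuple R * #|{: 'I_1 * 'I_1 * 'I_k}|.-tuple R) *
       (n3.-tuple R * #|{: 'I_1 * 'I_1 * 'I_k}|.-tuple R)) :=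
  \bigcap_(r in [set: 'I_k])
    [set w | ((tnth w.1.2 (enum_rank ((ord0, ord0, r) : 'I_1 * 'I_1 * 'I_k)))%:E < s r /\
              (tnth w.2.2 (enum_rank ((ord0, ord0, r) : 'I_1 * 'I_1 * 'I_k)))%:E < t r)%E].

Lemma EX_meas {R : realType} {dis} {X : measurableType dis} (d : X -> X -> R) a r e :
  is_metric d -> borel_of d -> measurable (EX d a r e).
Proof.
move=> md bd; case: e => [e| |].
- apply: (mopen_meas bd).
  have -> : EX d a r e%:E = mball d (a r.+1) e.
    apply/seteqP; split => x; rewrite /EX /mball /= lte_fin;
      by case: md => _ _ -> _.
  exact: mball_open.
- have -> : EX d a r +oo = setT by apply/seteqP; split => x // _; rewrite /EX /= ltey.
  exact: measurableT.
- have -> : EX d a r -oo = set0 by apply/seteqP; split => x //; rewrite /EX /= ltNye.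
  exact: measurable0.
Qed.

Lemma Gset_meas {R : realType} {dx dy} {X : measurableType dx} {Y : measurableType dy}
  (dX : X -> X -> R) (dY : Y -> Y -> R) a b s t :
  is_metric dX -> borel_of dX -> is_metric dY -> borel_of dY ->
  measurable (Gset dX dY a b s t).
Proof.
move=> mX bX mY bY; apply: bigcapT_measurable => r.
by apply: measurableX; apply: EX_meas.
Qed.

Lemma Bset_meas {R : realType} {n1 n3 : nat} k s t :
  measurable (@Bset R n1 n3 k s t).
Proof.
apply: fin_bigcap_measurable; first exact: finite_finset.
move=> r _.
have mI (e : \bar R) : measurable [set x : R | (x%:E < e)%E].
  case: e => [e| |].
  - have -> : [set x : R | (x%:E < e%:E)%E] = `]-oo, e[%classic.
      by apply/seteqP; split => x; rewrite /= in_itv /= lte_fin.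
    exact: measurable_itv.
  - have -> : [set x : R | (x%:E < +oo)%E] = setT by apply/seteqP; split => x //= _; rewrite ltey.
    exact: measurableT.
  - have -> : [set x : R | (x%:E < -oo)%E] = set0 by apply/seteqP; split => x //=; rewrite ltNye.
    exact: measurable0.
pose N := #|{: 'I_1 * 'I_1 * 'I_k}|.
pose W := ((n1.-tuple R * N.-tuple R) * (n3.-tuple R * N.-tuple R))%type.
pose i := enum_rank ((ord0, ord0, r) : 'I_1 * 'I_1 * 'I_k).
have f1 : measurable_fun [set: W] (fun w : W => tnth w.1.2 i).
  exact: measurableT_comp (measurable_tnth i)
  (measurableT_comp measurable_snd measurable_fst).
have f2 : measurable_fun [set: W] (fun w : W => tnth w.2.2 i).
  exact: measurableT_comp (measurable_tnth i)
  (measurableT_comp measurable_snd measurable_snd).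
have := measurableI _ _ (f1 measurableT _ (mI (s r))) (f2 measurableT _ (mI (t r))).
by rewrite !setTI.
Qed.

Lemma arr_rank {R : realType} {I : finType} (f : I -> R) (p : I) :
  tnth (arr f) (enum_rank p) = f p.
Proof. by rewrite /arr tnth_mktuple enum_rankK. Qed.

Lemma Aarr_rank {R : realType} {X : Type} (d : X -> X -> R) (T : X -> X) (a : nat -> X)
  k (x : 'I_1 -> X) (r : 'I_k) :
  tnth (Aarr d T a 1 1 k x) (enum_rank ((ord0, ord0, r) : 'I_1 * 'I_1 * 'I_k)) =
  d (x ord0) (a r.+1).
Proof. by rewrite /Aarr arr_rank. Qed.

Lemma Gset_push {R : realType} {dx dy} {X : measurableType dx} {Y : measurableType dy}
  (dX : X -> X -> R) (dY : Y -> Y -> R) T S a b (lam : probability (X * Y)%type R)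
  (P1 : probability (1.-tuple (X * Y)%type) R) k s t :
  is_metric dX -> borel_of dX -> is_metric dY -> borel_of dY ->
  is_nfold_product 1 lam P1 ->
  (forall r, (k <= r)%N -> s r = +oo%E /\ t r = +oo%E) ->
  lam (Gset dX dY a b s t) =
  pushforward P1 (anchored_pair dX T a dY S b 1 1 k) (Bset k s t).
Proof.
move=> mX bX mY bY HP Hk.
rewrite /pushforward.
have -> : anchored_pair dX T a dY S b 1 1 k @^-1` Bset k s t =
          [set t0 | forall i : 'I_1, Gset dX dY a b s t (tnth t0 i)].
  apply/seteqP; split => t0 /=.
  - move=> H i; rewrite (ord1 i) => r.
    case: (ltnP r k) => rk; last first.
      by have [-> ->] := Hk r rk; split; rewrite /EX /= ltey.
    have := H (Ordinal rk) I; rewrite /= /anchored_array /= !Aarr_rank /=.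
    by [].
  - move=> H r _ /=; rewrite /anchored_array /= !Aarr_rank /=.
    exact: (H ord0 r I).
rewrite (HP (fun _ => Gset dX dY a b s t)); last by move=> _; exact: Gset_meas.
by rewrite big_ord1.
Qed.



Lemma Gset_I {R : realType} {X Y : Type} (dX : X -> X -> R) (dY : Y -> Y -> R) a b s t s' t' :
  Gset dX dY a b s t `&` Gset dX dY a b s' t' =
  Gset dX dY a b (fun r => Order.min (s r) (s' r)) (fun r => Order.min (t r) (t' r)).
Proof.
apply/seteqP; split => z /=.
  move=> [H1 H2] r _; have [h1 h2] := H1 r I; have [h1' h2'] := H2 r I.
  by rewrite /EX /= !lt_min in h1 h2 h1' h2' *; rewrite h1 h2 h1' h2'.
move=> H; split => r _; have [h1 h2] := H r I; move: h1 h2;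
  by rewrite /EX /= !lt_min => /andP[? ?] /andP[? ?].
Qed.

Lemma sigma_preimage {T U : Type} (f : U -> T) (Sg : set (set U)) :
  sigma_algebra setT Sg -> sigma_algebra setT [set A | Sg (f @^-1` A)].
Proof.
move=> [S0 SC SU]; split => /=.
- by rewrite preimage_set0.
- by move=> A HA; rewrite !setTD preimage_setC -setTD; apply: SC.
- by move=> F HF; rewrite preimage_bigcup; apply: SU.
Qed.

Lemma trace_sigma {d} {Z : measurableType d} (H : set (set Z)) (K : set Z) :
  sigma_algebra setT
    [set C | measurable C /\ exists2 C', <<s H >> C' & C `&` K = C' `&` K].
Proof.
split => /=.
- split; first exact: measurable0.
  by exists set0; [exact: sigma_algebra0|].
- move=> A [mA [C' HC' E]]; split; first exact: measurableD.
  exists (setT `\` C'); first exact: sigma_algebraCD.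
  apply/seteqP; split => z [[_ h1] h2]; split => //; split => // h3; apply: h1.
  + have hz : (C' `&` K) z by split.
    by move: hz; rewrite -E => -[].
  + have hz : (A `&` K) z by split.
    by move: hz; rewrite E => -[].
- move=> F HF; split; first by apply: bigcupT_measurable => n; case: (HF n).
  have HC n : exists2 C', <<s H >> C' & F n `&` K = C' `&` K by case: (HF n).
  pose C' n := projT1 (cid2 (HC n)).
  exists (\bigcup_n C' n).
    by apply: sigma_algebra_bigcup => n; exact: (projT2 (cid2 (HC n))).1.
  rewrite !setI_bigcupl; apply: eq_bigcupr => n _.
  exact: (projT2 (cid2 (HC n))).2.
Qed.

Definition Wset {R : realType} {X : Type} (d : X -> X -> R) (a : nat -> X) (A : set X) r j
  : set X :=
  if pselect (EX d a r (j.+1%:R^-1)%:E `<=` A) then EX d a r (j.+1%:R^-1)%:E else set0.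

Lemma open_approx {R : realType} {X : Type} (d : X -> X -> R) (a : nat -> X) (A Sp : set X) :
  is_metric d -> mopen d A ->
  (forall x, Sp x -> forall e : R, 0 < e -> exists2 r, (1 <= r)%N & d x (a r) < e) ->
  A `&` Sp = (\bigcup_r \bigcup_j Wset d a A r j) `&` Sp.
Proof.
move=> [d0 d00 dsym dtr] oA dense.
apply/seteqP; split => x [Ax sx]; split => //.
- have [e e0 eA] := oA x Ax.
  have [j ej] : exists j, 0 + j.+1%:R^-1 < e / 2 by apply: ltr_add_invr; lra.
  rewrite add0r in ej.
  have [[//|r] _ xr] := dense x sx (j.+1%:R^-1) ltac:(by rewrite invr_gt0).
  exists r => //; exists j => //; rewrite /Wset.
  case: pselect => h; first by rewrite /EX /= lte_fin.
  exfalso; apply: h => y; rewrite /EX /= lte_fin => ya; apply: eA.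
  rewrite /mball /=; have := dtr x (a r.+1) y; rewrite (dsym (a r.+1) y) => H.
  apply: (le_lt_trans H); rewrite [e]splitr.
  by apply: ltrD; apply: lt_trans ej.
- move: Ax => [r _ [j _]]; rewrite /Wset; case: pselect => // h.
  exact: h.
Qed.



Theorem theorem13 (R : realType)
  (dispX dispY : measure_display)
  (X : measurableType dispX) (Y : measurableType dispY)
  (dX : X -> X -> R) (mu : probability X R) (T : X -> X)
  (dY : Y -> Y -> R) (nu : probability Y R) (S : Y -> Y)
  (a : nat -> X) (b : nat -> Y)
  (lam lam' : probability (X * Y)%type R)
  (P P' : forall n : nat, probability (n.-tuple (X * Y)%type) R) :
  cmmps dX mu T -> cmmps dY nu S ->
  dense_seq1 dX a (msupp dX mu) -> dense_seq1 dY b (msupp dY nu) ->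
  joining mu T nu S lam -> joining mu T nu S lam' ->
  (forall n, is_nfold_product n lam (P n)) ->
  (forall n, is_nfold_product n lam' (P' n)) ->
  (forall n m k : nat, (1 <= n)%N -> (1 <= m)%N -> (1 <= k)%N ->
     forall B, measurable B ->
       pushforward (P n) (anchored_pair dX T a dY S b n m k) B =
       pushforward (P' n) (anchored_pair dX T a dY S b n m k) B) ->
  forall C, measurable C -> lam C = lam' C.
Proof.
move=> [mX cX bX _ _] [mY cY bY _ _] [_ densa] [_ densb] [jX jY _] [jX' jY' _] HP HP' Hpush.
pose G := [set C : set (X * Y) | exists s t : nat -> \bar R, exists k,
  (forall r, (k <= r)%N -> s r = +oo%E /\ t r = +oo%E) /\ C = Gset dX dY a b s t].
have Gm : G `<=` measurable by move=> C [s [t [k [_ ->]]]]; exact: Gset_meas.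
have GI : setI_closed G.
  move=> C1 C2 [s [t [k [Hk ->]]]] [s' [t' [k' [Hk' ->]]]].
  exists (fun r => Order.min (s r) (s' r)), (fun r => Order.min (t r) (t' r)), (maxn k k').
  split; last exact: Gset_I.
  move=> r; rewrite geq_max => /andP[/Hk [-> ->] /Hk' [-> ->]].
  by rewrite !minxx.
have GT : G setT.
  exists (fun _ => +oo%E), (fun _ => +oo%E), 0%N; split => //.
  apply/seteqP; split => z // _ r _; split; by rewrite /EX /= ltey.
have Geq : forall C, G C -> lam C = lam' C.
  move=> C [s [t [k [Hk ->]]]].
  have Hk1 : forall r, (k.+1 <= r)%N -> s r = +oo%E /\ t r = +oo%E.
    by move=> r kr; apply: Hk; apply: ltnW.
  rewrite (Gset_push dX dY T S a b lam (P 1) k.+1 s t mX bX mY bY (HP 1) Hk1).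
  rewrite (Gset_push dX dY T S a b lam' (P' 1) k.+1 s t mX bX mY bY (HP' 1) Hk1).
  by apply: Hpush => //; apply: Bset_meas.
have sGeq : forall C, <<s G >> C -> lam C = lam' C.
  apply: (g_sigma_algebra_measure_unique G Gm (fun _ => setT)) => //.
  - by rewrite bigcup_const.
  - move=> _; apply: (le_lt_trans (probability_le1 lam measurableT)).
    by rewrite ltry.
have sGm : <<s G >> `<=` measurable.
  exact: smallest_sub (@sigma_algebra_measurable _ _) Gm.
have sGI : forall A B, <<s G >> A -> <<s G >> B -> <<s G >> (A `&` B).
  by move=> A B hA hB; exact: (@measurableI _ (g_sigma_algebraType G) A B hA hB).
have [NX [mNX NX0 subX]] := @supp_full _ _ _ dX mu mX cX bX.
have [NY [mNY NY0 subY]] := @supp_full _ _ _ dY nu mY cY bY.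
pose K := ~` NX `*` ~` NY.
have mK : measurable K by apply: measurableX; apply: measurableC.
have redK : forall (m : probability (X * Y)%type R),
    (forall A, measurable A -> m (A `*` setT) = mu A) ->
    (forall B, measurable B -> m (setT `*` B) = nu B) ->
    forall C, measurable C -> m C = m (C `&` K).
  move=> m hX hY C mC; rewrite (measureDI m mC mK).
  have h0 : m (C `\` K) = 0%E; last first.
    by transitivity (0 + m (C `&` K))%E; [congr (_ + _)%E; exact: h0|rewrite add0e].
  apply/negligibleP; first exact: measurableD.
  apply: (@negligibleS _ _ _ _ ((NX `*` setT) `|` (setT `*` NY))).
    move=> [x y] [_ /=]; rewrite /K /setX /= => h.
    case: (pselect (NX x)) => hx; [by left|right; split => //].
    case: (pselect (NY y)) => hy //.
    by exfalso; exact: h (conj hx hy).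
  apply: negligibleU; apply/negligibleP.
  - by apply: measurableX.
  - by transitivity (mu NX); [exact: hX|exact: NX0].
  - by apply: measurableX.
  - by transitivity (nu NY); [exact: hY|exact: NY0].
pose Sig := [set C : set (X * Y) | measurable C /\ exists2 C', <<s G >> C' & C `&` K = C' `&` K].
have SigI : forall A B, Sig A -> Sig B -> Sig (A `&` B).
  move=> A B [mA [CA hA EA]] [mB [CB hB EB]]; split; first exact: measurableI.
  by exists (CA `&` CB); [exact: sGI|rewrite (setIIl A B K) (setIIl CA CB K) EA EB].
have sS : sigma_algebra setT Sig by exact: trace_sigma.
have SigT : Sig setT.
  split; first exact: measurableT.
  by exists setT => //; apply: sub_sigma_algebra.
have SigX : forall A, measurable A -> Sig (A `*` setT).
  move=> A mA.
  suff HH : <<s [set A | mopen dX A] >> `<=` [set A | Sig (fst @^-1` A)].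
    by rewrite setXT; apply: HH; rewrite -bX.
  apply: smallest_sub; first by apply: (@sigma_preimage _ _ fst); exact sS.
  clear A mA => A oA /=.
  rewrite -setXT; split; first by apply: measurableX => //; exact: mopen_meas bX oA.
  exists ((\bigcup_r \bigcup_j Wset dX a A r j) `*` setT).
    rewrite setX_bigcupl; apply: sigma_algebra_bigcup => r.
    rewrite setX_bigcupl; apply: sigma_algebra_bigcup => j.
    rewrite /Wset; case: pselect => hp; last by rewrite set0X; exact: sigma_algebra0.
    apply: sub_sigma_algebra.
    exists (fun r' => if r' == r then (j.+1%:R^-1)%:E else +oo%E), (fun _ => +oo%E), r.+1.
    split.
      by move=> r' rr'; split => //; case: eqP => // ?; subst r'; rewrite ltnn in rr'.
    apply/seteqP; split => z /=.
      move=> [h _] r' _; split; last by rewrite /EX /= ltey.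
      by case: eqP => [->//|_]; rewrite /EX /= ltey.
    by move=> H; split => //; have [] := H r I; rewrite eqxx.
  have dens : forall x, (~` NX) x -> forall e : R, 0 < e -> exists2 r, (1 <= r)%N & dX x (a r) < e.
    move=> x hx; apply: (densa x); case: (pselect (msupp dX mu x)) => // hs.
    by exfalso; exact: hx (subX x hs).
  have E := open_approx dX a A (~` NX) mX oA dens.
  apply/seteqP; split => -[x y] [[h1 _] [h2 h3]]; (split; [split => //|by split]).
  + have hz : (A `&` ~` NX) x by split.
    by move: hz; rewrite E => -[].
  + have hz : ((\bigcup_r \bigcup_j Wset dX a A r j) `&` ~` NX) x by split.
    by move: hz; rewrite -E => -[].
have SigY : forall B, measurable B -> Sig (setT `*` B).
  move=> B mB.
  suff HH : <<s [set B | mopen dY B] >> `<=` [set B | Sig (snd @^-1` B)].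
    by rewrite setTX; apply: HH; rewrite -bY.
  apply: smallest_sub; first by apply: (@sigma_preimage _ _ snd); exact sS.
  clear B mB => B oB /=.
  rewrite -setTX; split; first by apply: measurableX => //; exact: mopen_meas bY oB.
  exists (setT `*` (\bigcup_r \bigcup_j Wset dY b B r j)).
    rewrite setX_bigcupr; apply: sigma_algebra_bigcup => r.
    rewrite setX_bigcupr; apply: sigma_algebra_bigcup => j.
    rewrite /Wset; case: pselect => hp; last by rewrite setX0; exact: sigma_algebra0.
    apply: sub_sigma_algebra.
    exists (fun _ => +oo%E), (fun r' => if r' == r then (j.+1%:R^-1)%:E else +oo%E), r.+1.
    split.
      by move=> r' rr'; split => //; case: eqP => // ?; subst r'; rewrite ltnn in rr'.
    apply/seteqP; split => z /=.
      move=> [_ h] r' _; split; first by rewrite /EX /= ltey.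
      by case: eqP => [->//|_]; rewrite /EX /= ltey.
    by move=> H; split => //; have [] := H r I; rewrite eqxx.
  have dens : forall x, (~` NY) x -> forall e : R, 0 < e -> exists2 r, (1 <= r)%N & dY x (b r) < e.
    move=> x hx; apply: (densb x); case: (pselect (msupp dY nu x)) => // hs.
    by exfalso; exact: hx (subY x hs).
  have E := open_approx dY b B (~` NY) mY oB dens.
  apply/seteqP; split => -[x y] [[_ h1] [h2 h3]]; (split; [split => //|by split]).
  + have hz : (B `&` ~` NY) y by split.
    by move: hz; rewrite E => -[].
  + have hz : ((\bigcup_r \bigcup_j Wset dY b B r j) `&` ~` NY) y by split.
    by move: hz; rewrite -E => -[].
have mSig : measurable `<=` Sig.
  rewrite measurable_prod_measurableType.
  apply: smallest_sub; first exact: trace_sigma.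
  move=> _ [A mA [B mB <-]].
  have -> : A `*` B = (A `*` setT) `&` (setT `*` B).
    by apply/seteqP; split => -[x y] /=; [move=> [? ?]|move=> [[? _] [_ ?]]].
  by apply: SigI; [apply: SigX|apply: SigY].
move=> C mC.
have [_ [C' hC' E]] := mSig C mC.
rewrite (redK lam jX jY C mC) (redK lam' jX' jY' C mC) E.
rewrite -(redK lam jX jY C' (sGm C' hC')) -(redK lam' jX' jY' C' (sGm C' hC')).
exact: sGeq.
Qed.
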